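(* Let $\mathbb N$ be a strongly connected symmetric directed graph on $m$ vertices without self-arcs, with arc matrices $C_{ij}$ (each with $n$ columns) such that $\bar{\mathbb N}$ is well-configured. Let $\alpha(t)>0$, $t=0,1,2,\dots$, satisfy $\sum_t\alpha(t)=\infty$ and $\sum_t\alpha(t)^2<\infty$. For arbitrary $x_i(0)\in\mathbb R^n$, define for each agent $i$ $$x_i(t+1)=x_i(t)-\alpha(t)\sum_{j\in\mathcal N_i}\big(C_{ij}'C_{ij}+C_{ji}'C_{ji}\big)\big(x_i(t)-x_j(t)\big).$$ Then there exists $x^*\in\mathbb R^n$ such that $x_i(t)\to x^*$ as $t\to\infty$ for every $i$.
   Context: A directed graph is symmetric if whenever $(i,j)$ is an arc so is $(j,i)$. $\mathcal N_i$ is the set of neighbors $j$ of agent $i$ (those $j\ne i$ with $(j,i)$ an arc). Each arc $(j,i)$ carries a real matrix $C_{ji}$ with $n$ columns; $'$ denotes transpose. $\bar{\mathbb N}$ is well-configured if for all $x_1,\dots,x_m\in\mathbb R^n$, $C_{ji}x_i=C_{ji}x_j$ for every arc $(j,i)$ implies $x_1=\cdots=x_m$. *)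

(* Defs.v *)
From HB Require Import structures.
From mathcomp Require Import all_boot all_order all_algebra.
From mathcomp Require Import all_classical all_reals all_analysis.
Set Implicit Arguments. Unset Strict Implicit. Unset Printing Implicit Defensive.
Import Order.TTheory GRing.Theory Num.Theory.
Local Open Scope ring_scope.

(* A directed graph on vertices 'I_m is given by its arc relation:
   [arc j i] means (j,i) is an arc. *)
Definition symmetric_graph (m : nat) (arc : rel 'I_m) : Prop :=
  forall i j, arc i j -> arc j i.

Definition no_self_arcs (m : nat) (arc : rel 'I_m) : Prop :=
  forall i, ~~ arc i i.

Definition strongly_connected (m : nat) (arc : rel 'I_m) : Prop :=
  forall i j, connect arc i j.

Definition well_configured (R : realType) (m n : nat) (arc : rel 'I_m)
  (rows : 'I_m -> 'I_m -> nat) (C : forall j i, 'M[R]_(rows j i, n)) : Prop :=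
  forall xs : 'I_m -> 'cV[R]_n,
    (forall i j, arc j i -> C j i *m xs i = C j i *m xs j) ->
    forall i j, xs i = xs j.

(* Main.v *)
Require Import Defs.
From HB Require Import structures.
From mathcomp Require Import all_boot all_order all_algebra.
From mathcomp Require Import all_classical all_reals all_analysis.
From mathcomp Require Import ring lra.
Import Order.TTheory GRing.Theory Num.Theory.
Import numFieldNormedType.Exports.
Set Implicit Arguments. Unset Strict Implicit. Unset Printing Implicit Defensive.
Local Open Scope ring_scope.
Local Open Scope classical_set_scope.
Section Core.
Variable R : realFieldType.

Definition dotv N (u v : 'rV[R]_N) : R := \sum_k u 0 k * v 0 k.

Lemma dotvC N (u v : 'rV[R]_N) : dotv u v = dotv v u.
Proof. by apply: eq_bigr => k _; rewrite mulrC. Qed.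

Lemma dotvDl N (u v w : 'rV[R]_N) : dotv (u + v) w = dotv u w + dotv v w.
Proof. by rewrite /dotv -big_split; apply: eq_bigr => k _; rewrite mxE mulrDl. Qed.

Lemma dotvZl N a (u w : 'rV[R]_N) : dotv (a *: u) w = a * dotv u w.
Proof. by rewrite /dotv mulr_sumr; apply: eq_bigr => k _; rewrite mxE mulrA. Qed.

Lemma dotvDr N (u v w : 'rV[R]_N) : dotv w (u + v) = dotv w u + dotv w v.
Proof. by rewrite dotvC dotvDl !(dotvC w). Qed.

Lemma dotvZr N a (u w : 'rV[R]_N) : dotv w (a *: u) = a * dotv w u.
Proof. by rewrite dotvC dotvZl dotvC. Qed.

Lemma dotvNl N (u w : 'rV[R]_N) : dotv (- u) w = - dotv u w.
Proof. by rewrite -scaleN1r dotvZl mulN1r. Qed.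

Lemma dotvNr N (u w : 'rV[R]_N) : dotv w (- u) = - dotv w u.
Proof. by rewrite dotvC dotvNl dotvC. Qed.

Lemma dotv0r N (w : 'rV[R]_N) : dotv w 0 = 0.
Proof. by rewrite /dotv big1 // => k _; rewrite mxE mulr0. Qed.

Lemma dotv_ge0 N (u : 'rV[R]_N) : 0 <= dotv u u.
Proof. by apply: sumr_ge0 => k _; rewrite -expr2 sqr_ge0. Qed.

Lemma dotv_coord N (u : 'rV[R]_N) k : u 0 k ^+ 2 <= dotv u u.
Proof.
rewrite /dotv (bigD1 k) //= -expr2 lerDl.
by apply: sumr_ge0 => l _; rewrite -expr2 sqr_ge0.
Qed.

Lemma dotv_eq0 N (u : 'rV[R]_N) : dotv u u = 0 -> u = 0.
Proof.
move=> h; apply/rowP => k; rewrite mxE.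
have := dotv_coord u k; rewrite h => h2.
by apply/eqP; rewrite -sqrf_eq0 eq_le h2 sqr_ge0.
Qed.

Lemma qbound N (H : 'M[R]_N) (u : 'rV[R]_N) :
  dotv u (u *m H) <= (\sum_k \sum_l `|H k l|) * dotv u u.
Proof.
rewrite /dotv.
under eq_bigr => l _ do rewrite mxE mulr_sumr.
rewrite mulr_suml exchange_big /=.
apply: ler_sum => k _; rewrite mulr_suml; apply: ler_sum => l _.
rewrite -/(dotv u u).
have hk := dotv_coord u k; have hl := dotv_coord u l.
have hd := dotv_ge0 u.
set a := u 0 k in hk *; set b := u 0 l in hl *; set h := H k l.
have e1 : a * (b * h) <= `|a * (b * h)| by apply: ler_norm.
rewrite !normrM in e1.
have e2 : 2 * (`|a| * `|b|) <= a ^+ 2 + b ^+ 2.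
  have : 0 <= (`|a| - `|b|) ^+ 2 by apply: sqr_ge0.
  by rewrite -(real_normK (num_real a)) -(real_normK (num_real b)); nra.
have ha := normr_ge0 a; have hb := normr_ge0 b; have hh := normr_ge0 h.
rewrite mulrC -mulrA (mulrC h); apply: (le_trans e1).
nra.
Qed.


Section Core2.
Variables (N : nat) (M : 'M[R]_N).
Hypothesis sym : forall u v, dotv u (v *m M) = dotv (u *m M) v.
Hypothesis psd : forall u, 0 <= dotv u (u *m M).
Hypothesis def : forall u, dotv u (u *m M) = 0 -> u = 0.

Lemma cs a b : dotv a (b *m M) ^+ 2 <= dotv a (a *m M) * dotv b (b *m M).
Proof.
set A := dotv a (a *m M); set B := dotv a (b *m M); set C := dotv b (b *m M).
have q s : 0 <= A + 2 * s * B + s ^+ 2 * C.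
  have := psd (a + s *: b).
  rewrite mulmxDl -scalemxAl !dotvDl !dotvDr !dotvZl !dotvZr.
  have -> : dotv b (a *m M) = B by rewrite sym dotvC.
  rewrite -/A -/B -/C.
  by move=> h; apply: (le_trans h); rewrite le_eqVlt; apply/orP; left; apply/eqP; ring.
have hA : 0 <= A by apply: psd.
have [C0|Cn0] := eqVneq C 0.
  rewrite C0 mulr0.
  have [B0|Bn0] := eqVneq B 0; first by rewrite B0 expr0n.
  have := q (- (A + 1) / (2 * B)); rewrite C0 mulr0 addr0.
  have -> : 2 * (- (A + 1) / (2 * B)) * B = - (A + 1).
    by field.
  lra.
have hC : 0 < C by rewrite lt_neqAle eq_sym Cn0 psd.
have := q (- B / C).
have -> : A + 2 * (- B / C) * B + (- B / C) ^+ 2 * C = A - B ^+ 2 / C.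
  by field; rewrite gt_eqF.
rewrite subr_ge0 ler_pdivrMr //.
Qed.

Lemma M_unit : M \in unitmx.
Proof.
rewrite -row_free_unit -kermx_eq0; apply/eqP/row_matrixP => k.
rewrite row0; apply: def.
by rewrite -row_mul mulmx_ker row0 dotv0r.
Qed.

Lemma coercive : exists2 c, 0 < c & forall u, c * dotv u u <= dotv u (u *m M).
Proof.
set K := \sum_k \sum_l `|(invmx M) k l|.
have K0 : 0 <= K by apply: sumr_ge0 => k _; apply: sumr_ge0 => l _.
exists (K + 1)^-1; first by rewrite invr_gt0; lra.
move=> z.
set w := z *m invmx M.
have hw : w *m M = z by rewrite /w -mulmxA mulVmx ?mulmx1 ?M_unit.
have e1 : dotv z z = dotv w (z *m M) by rewrite sym hw.
have e2 : dotv w (w *m M) = dotv z (z *m invmx M) by rewrite hw dotvC.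
have hb := qbound (invmx M) z.
have hc := cs w z.
rewrite -e1 e2 -/K in hc hb.
have hz := dotv_ge0 z.
have hp := psd z.
set D := dotv z z in hz hb hc *; set P := dotv z (z *m M) in hp hc *.
rewrite mulrC ler_pdivrMr; last lra.
have [D0|Dn0] := eqVneq D 0; first by rewrite D0; nra.
have Dp : 0 < D by rewrite lt_neqAle eq_sym Dn0.
have : D ^+ 2 <= K * D * P by apply: (le_trans hc); nra.
nra.
Qed.

End Core2.

Lemma dotvE N (u v : 'rV[R]_N) : dotv u v = (u *m v^T) 0 0.
Proof. by rewrite mxE; apply: eq_bigr => k _; rewrite mxE. Qed.

Lemma dotv_tr N P (X : 'M[R]_(N, P)) u v : dotv u (v *m X) = dotv (u *m X^T) v.
Proof. by rewrite !dotvE trmx_mul mulmxA. Qed.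

Lemma bound N (M : 'M[R]_N) : exists2 K, 0 < K &
  forall u, dotv (u *m M) (u *m M) <= K * dotv u u.
Proof.
set K := \sum_k \sum_l `|(M *m M^T) k l|.
have K0 : 0 <= K by apply: sumr_ge0 => k _; apply: sumr_ge0 => l _.
exists (K + 1); first lra.
move=> u; have := qbound (M *m M^T) u.
rewrite mulmxA dotv_tr trmxK -/K => h; apply: (le_trans h).
by rewrite ler_wpM2r ?dotv_ge0 // lerDl.
Qed.

Lemma lin1E N P (g : 'rV[R]_N -> 'rV[R]_P)
  (gD : forall u v, g (u + v) = g u + g v)
  (gZ : forall a u, g (a *: u) = a *: g u) u :
  u *m lin1_mx g = g u.
Proof.
have g0 : g 0 = 0.
  by have := gZ 0 0; rewrite !scale0r.
rewrite [u in RHS]matrix_sum_delta big_ord1 (big_morph g gD g0).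
apply/rowP=> i; rewrite mxE summxE; apply: eq_bigr => j _.
by rewrite gZ !mxE.
Qed.

End Core.

Section App.
Variables (R : realType) (m n : nat) (arc : rel 'I_m)
  (rows : 'I_m -> 'I_m -> nat) (C : forall j i, 'M[R]_(rows j i, n)).
Hypothesis arc_sym : symmetric_graph arc.
Hypothesis wc : well_configured arc C.

Definition vd p (u v : 'cV[R]_p) : R := (u^T *m v) 0 0.

Lemma vdE p (u v : 'cV[R]_p) : vd u v = \sum_a u a 0 * v a 0.
Proof. by rewrite /vd mxE; apply: eq_bigr => a _; rewrite mxE. Qed.

Lemma vdC p (u v : 'cV[R]_p) : vd u v = vd v u.
Proof. by rewrite !vdE; apply: eq_bigr => a _; rewrite mulrC. Qed.

Lemma vdDl p (u v w : 'cV[R]_p) : vd (u + v) w = vd u w + vd v w.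
Proof. by rewrite /vd linearD /= mulmxDl mxE. Qed.

Lemma vdNl p (u w : 'cV[R]_p) : vd (- u) w = - vd u w.
Proof. by rewrite /vd linearN /= mulNmx mxE. Qed.

Lemma vdBl p (u v w : 'cV[R]_p) : vd (u - v) w = vd u w - vd v w.
Proof. by rewrite vdDl vdNl. Qed.

Lemma vdDr p (u v w : 'cV[R]_p) : vd w (u + v) = vd w u + vd w v.
Proof. by rewrite vdC vdDl !(vdC w). Qed.

Lemma vdNr p (u w : 'cV[R]_p) : vd w (- u) = - vd w u.
Proof. by rewrite vdC vdNl vdC. Qed.

Lemma vd_sumr p I (r : seq I) (P : pred I) (F : I -> 'cV[R]_p) u :
  vd u (\sum_(i <- r | P i) F i) = \sum_(i <- r | P i) vd u (F i).
Proof. by rewrite /vd mulmx_sumr summxE. Qed.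

Lemma vd_suml p I (r : seq I) (P : pred I) (F : I -> 'cV[R]_p) u :
  vd (\sum_(i <- r | P i) F i) u = \sum_(i <- r | P i) vd (F i) u.
Proof. by rewrite vdC vd_sumr; apply: eq_bigr => i _; rewrite vdC. Qed.

Lemma vd_ge0 p (u : 'cV[R]_p) : 0 <= vd u u.
Proof. by rewrite vdE; apply: sumr_ge0 => a _; rewrite -expr2 sqr_ge0. Qed.

Lemma vd_eq0 p (u : 'cV[R]_p) : vd u u = 0 -> u = 0.
Proof.
rewrite vdE => h; apply/matrixP => a b; rewrite (ord1 b) mxE.
have h0 : forall a, true -> 0 <= u a 0 * u a 0 by move=> ? _; rewrite -expr2 sqr_ge0.
have := psumr_eq0P h0 h (i:=a) isT.
by move/eqP; rewrite -expr2 sqrf_eq0 => /eqP.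
Qed.

Lemma vd_mul p q (A : 'M[R]_(q, p)) u v : vd u (A^T *m (A *m v)) = vd (A *m u) (A *m v).
Proof. by rewrite /vd mulmxA trmx_mul. Qed.

Lemma vd_tr p (A : 'M[R]_p) u v : vd u (A *m v) = vd v (A^T *m u).
Proof.
rewrite /vd -[in LHS](trmxK (u^T *m (A *m v))) mxE.
by rewrite !trmx_mul trmxK mulmxA.
Qed.

Definition Am i j : 'M[R]_n := (C i j)^T *m C i j + (C j i)^T *m C j i.

Lemma AmC i j : Am i j = Am j i.
Proof. by rewrite /Am addrC. Qed.

Lemma Am_tr i j : (Am i j)^T = Am i j.
Proof. by rewrite /Am linearD /= !trmx_mul !trmxK. Qed.

Definition Lf (s : 'I_m -> 'cV[R]_n) i := \sum_(j < m | arc j i) (Am i j *m (s i - s j)).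
Definition Gf (s : 'I_m -> 'cV[R]_n) i := Lf s i + \sum_j s j.
Definition vsum (s s' : 'I_m -> 'cV[R]_n) := \sum_i vd (s i) (s' i).

Lemma arcC i j : arc i j = arc j i.
Proof. by apply/idP/idP; apply: arc_sym. Qed.

Lemma swap (T : zmodType) (F : 'I_m -> 'I_m -> T) :
  \sum_i \sum_(j | arc j i) F i j = \sum_i \sum_(j | arc j i) F j i.
Proof.
rewrite (exchange_big_dep xpredT) //=.
by apply: eq_bigr => i _; apply: eq_bigl => j; rewrite arcC.
Qed.

Lemma K1 z y : 2 * vsum z (Lf y) =
  \sum_i \sum_(j | arc j i) vd (z i - z j) (Am i j *m (y i - y j)).
Proof.
have e : vsum z (Lf y) = \sum_i \sum_(j | arc j i) vd (z i) (Am i j *m (y i - y j)).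
  by apply: eq_bigr => i _; rewrite vd_sumr.
have e2 : vsum z (Lf y) = \sum_i \sum_(j | arc j i) - vd (z j) (Am i j *m (y i - y j)).
  rewrite e swap; apply: eq_bigr => i _; apply: eq_bigr => j _.
  by rewrite AmC -vdNr -mulmxN opprB.
rewrite mulr2n mulrDl mul1r.
rewrite {1}e e2 -big_split /=; apply: eq_bigr => i _.
by rewrite -big_split /=; apply: eq_bigr => j _; rewrite vdBl.
Qed.

Lemma Lf_sum s : \sum_i Lf s i = 0.
Proof.
have e : \sum_i Lf s i = - \sum_i Lf s i.
  rewrite /Lf [LHS]swap -sumrN; apply: eq_bigr => i _.
  rewrite -sumrN; apply: eq_bigr => j _.
  by rewrite AmC -mulmxN opprB.
apply/matrixP => a b; move/matrixP: e => /(_ a b).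
rewrite !mxE => h; lra.
Qed.

Lemma vsumC z y : vsum z y = vsum y z.
Proof. by apply: eq_bigr => i _; rewrite vdC. Qed.

Lemma vsumG z y : vsum z (Gf y) = vsum z (Lf y) + vd (\sum_i z i) (\sum_i y i).
Proof.
rewrite /vsum /Gf vd_suml -big_split /=; apply: eq_bigr => i _.
by rewrite vdDr.
Qed.

Lemma Lf_sym z y : vsum z (Lf y) = vsum y (Lf z).
Proof.
have h1 := K1 z y; have h2 := K1 y z.
have e : \sum_i \sum_(j | arc j i) vd (z i - z j) (Am i j *m (y i - y j)) =
  \sum_i \sum_(j | arc j i) vd (y i - y j) (Am i j *m (z i - z j)).
  by apply: eq_bigr => i _; apply: eq_bigr => j _; rewrite vd_tr Am_tr.
rewrite e -h2 in h1; lra.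
Qed.

Lemma Gf_sym z y : vsum z (Gf y) = vsum (Gf z) y.
Proof. by rewrite [RHS]vsumC !vsumG Lf_sym vdC. Qed.

Lemma term_eq i j d : vd d (Am i j *m d) = vd (C i j *m d) (C i j *m d) + vd (C j i *m d) (C j i *m d).
Proof. by rewrite /Am mulmxDl vdDr -!mulmxA !vd_mul. Qed.

Lemma Lf_psd y : 0 <= vsum y (Lf y).
Proof.
suff : 0 <= 2 * vsum y (Lf y) by lra.
rewrite K1; apply: sumr_ge0 => i _; apply: sumr_ge0 => j _.
by rewrite term_eq addr_ge0 ?vd_ge0.
Qed.

Lemma Gf_psd y : 0 <= vsum y (Gf y).
Proof. by rewrite vsumG addr_ge0 ?vd_ge0 ?Lf_psd. Qed.

Lemma Gf_def y : vsum y (Gf y) = 0 -> y = (fun _ => 0).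
Proof.
rewrite vsumG => h.
have hL := Lf_psd y; have hS := vd_ge0 (\sum_i y i).
have h1 : vsum y (Lf y) = 0 by lra.
have h2 : vd (\sum_i y i) (\sum_i y i) = 0 by lra.
have h3 : 2 * vsum y (Lf y) = 0 by rewrite h1 mulr0.
rewrite K1 in h3.
have hc : forall i j, arc j i -> C j i *m y i = C j i *m y j.
  move=> i j hij.
  have p1 : forall i, true -> 0 <= \sum_(j | arc j i) vd (y i - y j) (Am i j *m (y i - y j)).
    by move=> k _; apply: sumr_ge0 => l _; rewrite term_eq addr_ge0 ?vd_ge0.
  have := psumr_eq0P p1 h3 (i:=i) isT.
  have p2 : forall j, arc j i -> 0 <= vd (y i - y j) (Am i j *m (y i - y j)).
    by move=> l _; rewrite term_eq addr_ge0 ?vd_ge0.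
  move/(psumr_eq0P p2)/(_ j hij); rewrite term_eq => e.
  have hh := vd_ge0 (C i j *m (y i - y j)); have hh2 := vd_ge0 (C j i *m (y i - y j)).
  have /vd_eq0 : vd (C j i *m (y i - y j)) (C j i *m (y i - y j)) = 0 by lra.
  by rewrite mulmxBr => /eqP; rewrite subr_eq0 => /eqP.
have hall := wc hc.
apply: funext => i.
have := vd_eq0 h2.
rewrite (eq_bigr (fun _ => y i)); last by move=> j _; rewrite (hall j i).
rewrite sumr_const card_ord => /matrixP hz.
apply/matrixP => a b; have := hz a b; rewrite -scaler_nat !mxE => /eqP.
rewrite mulf_eq0 pnatr_eq0 => /orP[/eqP m0|/eqP //].
have hi : (nat_of_ord i < m)%N := ltn_ord i; by move: hi; rewrite [X in (_ < X)%N]m0.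
Qed.

Definition vecs (s : 'I_m -> 'cV[R]_n) : 'rV[R]_(n * m) := mxvec (\matrix_(a, i) s i a 0).
Definition unvec (u : 'rV[R]_(n * m)) : 'I_m -> 'cV[R]_n := fun i => col i (vec_mx u).

Lemma unvecK s : unvec (vecs s) = s.
Proof.
apply: funext => i; rewrite /unvec /vecs mxvecK.
by apply/matrixP => a b; rewrite (ord1 b) !mxE.
Qed.

Lemma vecsK u : vecs (unvec u) = u.
Proof.
rewrite /vecs /unvec.
have -> : (\matrix_(a, i) col i (vec_mx u) a 0) = vec_mx u.
  by apply/matrixP => a b; rewrite !mxE.
exact: vec_mxK.
Qed.

Lemma vecsD s s' : vecs (fun i => s i + s' i) = vecs s + vecs s'.
Proof.
rewrite /vecs -linearD /=; congr mxvec.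
by apply/matrixP => a b; rewrite !mxE.
Qed.

Lemma vecsZ c s : vecs (fun i => c *: s i) = c *: vecs s.
Proof.
rewrite /vecs -linearZ /=; congr mxvec.
by apply/matrixP => a b; rewrite !mxE.
Qed.

Lemma vecs0 : vecs (fun _ => 0) = 0.
Proof.
rewrite /vecs -(linear0 (@mxvec R n m)); congr mxvec.
by apply/matrixP => a b; rewrite !mxE.
Qed.

Lemma unvecD u v : unvec (u + v) = (fun i => unvec u i + unvec v i).
Proof. by apply: funext => i; apply/matrixP => a b; rewrite !mxE. Qed.

Lemma unvecZ c u : unvec (c *: u) = (fun i => c *: unvec u i).
Proof. by apply: funext => i; apply/matrixP => a b; rewrite !mxE. Qed.

Lemma GfD s s' : Gf (fun i => s i + s' i) = (fun i => Gf s i + Gf s' i).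
Proof.
apply: funext => i; rewrite /Gf /Lf addrACA -!big_split /=; congr (_ + _).
by apply: eq_bigr => j _; rewrite -mulmxDr opprD addrACA.
Qed.

Lemma GfZ c s : Gf (fun i => c *: s i) = (fun i => c *: Gf s i).
Proof.
apply: funext => i; rewrite /Gf /Lf scalerDr !scaler_sumr; congr (_ + _).
by apply: eq_bigr => j _; rewrite -scalerBr scalemxAr.
Qed.

Lemma dot_vecs s s' : dotv (vecs s) (vecs s') = vsum s s'.
Proof.
rewrite /dotv (reindex (uncurry (@mxvec_index n m))) /=; last first.
  by case: (curry_mxvec_bij n m) => f h1 h2; exists f => x _; [apply: h1|apply: h2].
rewrite (eq_bigr (fun p => (fun a i => vecs s 0 (mxvec_index a i) * vecs s' 0 (mxvec_index a i)) p.1 p.2)); last by case.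
rewrite -(pair_bigA _ (fun a i => vecs s 0 (mxvec_index a i) * vecs s' 0 (mxvec_index a i))) /=.
rewrite exchange_big /=; apply: eq_bigr => i _; rewrite vdE; apply: eq_bigr => a _.
by rewrite /vecs !mxvecE !mxE.
Qed.

Definition gmap u := vecs (Gf (unvec u)).
Definition Mg := lin1_mx gmap.

Lemma Mmul u : u *m Mg = vecs (Gf (unvec u)).
Proof.
apply: lin1E => [a b|c a]; rewrite /gmap.
  by rewrite unvecD GfD vecsD.
by rewrite unvecZ GfZ vecsZ.
Qed.

Lemma dotM u v : dotv u (v *m Mg) = vsum (unvec u) (Gf (unvec v)).
Proof. by rewrite Mmul -{1}[u]vecsK dot_vecs. Qed.

Lemma Msym u v : dotv u (v *m Mg) = dotv (u *m Mg) v.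
Proof. by rewrite dotM dotvC dotM vsumC Gf_sym. Qed.

Lemma Mpsd u : 0 <= dotv u (u *m Mg).
Proof. by rewrite dotM Gf_psd. Qed.

Lemma Mdef u : dotv u (u *m Mg) = 0 -> u = 0.
Proof. by rewrite dotM => /Gf_def h; rewrite -[u]vecsK h vecs0. Qed.

End App.

Lemma decay (R : realType) (V alpha : nat -> R) c K :
  0 < c -> 0 < K -> (forall t, 0 <= V t) -> (forall t, 0 < alpha t) ->
  (forall t, V t.+1 <= V t - 2 * alpha t * c * V t + alpha t ^+ 2 * K * V t) ->
  series alpha @ \oo --> +oo ->
  cvgn (series (fun t => alpha t ^+ 2)) ->
  forall eps, 0 < eps -> exists N, forall t, (N <= t)%N -> V t < eps.
Proof.
move=> c0 K0 V0 a0 hV hS ha2 eps eps0.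
have a2 := cvg_series_cvg_0 ha2.
set e := Num.min (c / K) (1 / c).
have e0 : 0 < e by rewrite lt_min !divr_gt0.
have [T _ HT] := (cvgrPdist_lt _ _).1 a2 (e ^+ 2) (exprn_gt0 2 e0).
have small t : (T <= t)%N -> alpha t * K <= c /\ alpha t * c <= 1.
  move=> /HT /=; rewrite sub0r normrN ger0_norm ?sqr_ge0 // => h.
  have hat := a0 t.
  have he : alpha t <= e.
    rewrite leNgt; apply/negP => hlt.
    nra.
  have h1 : e <= c / K by rewrite ge_min lexx.
  have h2 : e <= 1 / c by rewrite ge_min lexx orbT.
  split.
    by rewrite -ler_pdivlMr //; apply: le_trans he h1.
  by rewrite -ler_pdivlMr //; apply: le_trans he h2.
have step t : (T <= t)%N -> V t.+1 <= (1 - c * alpha t) * V t.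
  move=> /small [h1 h2]; have := hV t; have := V0 t; have := a0 t.
  set a := alpha t; set v := V t => ha hv hv'.
  apply: (le_trans hv').
  have : a ^+ 2 * K * v <= a * c * v.
    rewrite expr2 -!mulrA ler_pM2l // !mulrA ler_wpM2r //.
  lra.
set S := series alpha.
have Spos k : 0 <= S (T + k)%N - S T.
  elim: k => [|k IH]; first by rewrite addn0 subrr.
  rewrite addnS /S seriesSr -/S; have := a0 (T + k)%N; lra.
have ind k : V (T + k)%N * (1 + c * (S (T + k)%N - S T)) <= V T.
  elim: k => [|k IH]; first by rewrite addn0 subrr mulr0 addr0 mulr1.
  rewrite addnS /S seriesSr -/S.
  have hs := step (T + k)%N (leq_addr _ _).
  have [_ h2] := small (T + k)%N (leq_addr _ _).
  have hD := Spos k; have hv := V0 (T + k); have hv' := V0 (T + k)%N.+1.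
  have ha := a0 (T + k)%N.
  move: IH hs h2 hD hv hv' ha.
  set v := V (T + k)%N; set v' := V (T + k)%N%N.+1; set a := alpha (T + k)%N.
  set D := S (T + k)%N - S T => IH hs h2 hD hv hv' ha.
  have -> : S (T + k)%N + a - S T = D + a by rewrite /D; ring.
  have hp : 0 <= 1 + c * (D + a) by nra.
  have : v' * (1 + c * (D + a)) <= (1 - c * a) * v * (1 + c * (D + a)).
    by rewrite ler_wpM2r.
  have : (1 - c * a) * v * (1 + c * (D + a)) <= v * (1 + c * D).
    have -> : (1 - c * a) * v * (1 + c * (D + a)) = v * (1 + c * D) - v * (c * a * c * D + c * a * (c * a)) by ring.
    by rewrite lerBlDr lerDl mulr_ge0 // addr_ge0 // !mulr_ge0 // ltW.
  lra.
have [N2 _ HN2] := (cvgryPge _).1 hS (S T + V T / (c * eps)).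
exists (maxn T N2) => t; rewrite geq_max => /andP[hT hN].
have := HN2 t hN; rewrite /= -/S => hSt.
have := ind (t - T)%N; rewrite subnKC // => hi.
have hVT := V0 T; have hVt := V0 t.
set w := V T / (c * eps) in hSt.
have hw : c * eps * w = V T by rewrite /w mulrC divfK // mulf_neq0 ?gt_eqF.
rewrite ltNge; apply/negP => he.
have : c * (S t - S T) >= c * w by rewrite ler_pM2l //; lra.
move=> hcw.
have hD : 0 <= c * (S t - S T) by apply: le_trans hcw; apply: mulr_ge0; [apply: ltW|]; [|rewrite /w divr_ge0 // mulr_ge0 // ltW].
have p1 : 0 <= (V t - eps) * (1 + c * (S t - S T)) by apply: mulr_ge0; lra.
have p2 : 0 <= eps * (c * (S t - S T) - c * w) by apply: mulr_ge0; lra.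
nra.
Qed.


Theorem theorem4 (R : realType) (m n : nat) (arc : rel 'I_m)
  (rows : 'I_m -> 'I_m -> nat) (C : forall j i, 'M[R]_(rows j i, n))
  (alpha : nat -> R) (x : nat -> 'I_m -> 'cV[R]_n) :
  symmetric_graph arc -> no_self_arcs arc -> strongly_connected arc ->
  well_configured arc C ->
  (forall t, 0 < alpha t) ->
  series alpha @ \oo --> +oo ->
  cvgn (series (fun t => alpha t ^+ 2)) ->
  (forall t i, x t.+1 i =
     x t i - alpha t *: \sum_(j < m | arc j i)
        (((C i j)^T *m C i j + (C j i)^T *m C j i) *m (x t i - x t j))) ->
  exists xstar : 'cV[R]_n, forall i, x t i @[t --> \oo] --> xstar.
Proof.
move=> hsym _ _ hwc apos hS ha2 rec.
have [m0|mpos] := posnP m.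
  exists 0 => i; exfalso; move: (ltn_ord i); by rewrite [X in (_ < X)%N]m0.
have rec' : forall t i, x t.+1 i = x t i - alpha t *: Lf arc C (x t) i := rec.
set xs := (m%:R)^-1 *: \sum_i x 0 i.
have sinv t : \sum_i x t i = \sum_i x 0 i.
  elim: t => [//|t IH]; rewrite -IH.
  under eq_bigr => i _ do rewrite rec'.
  by rewrite sumrB -scaler_sumr Lf_sum // scaler0 subr0.
set Y := fun t i => x t i - xs.
have hY0 t : \sum_i Y t i = 0.
  rewrite /Y sumrB sinv sumr_const card_ord -scaler_nat /xs scalerA mulfV ?scale1r ?subrr //.
  by rewrite pnatr_eq0 -lt0n.
have hLY t : Lf arc C (x t) = Lf arc C (Y t).
  apply: funext => i; apply: eq_bigr => j _; congr (_ *m _).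
  by rewrite /Y opprB addrA subrK.
have hY t : Y t.+1 = (fun i => Y t i + (- alpha t) *: Gf arc C (Y t) i).
  apply: funext => i; rewrite /Gf hY0 addr0 -hLY /Y rec' scaleNr.
  by rewrite addrAC.
set u := fun t => vecs (Y t).
have hu t : u t.+1 = u t + (- alpha t) *: (u t *m Mg arc C).
  by rewrite Mmul unvecK /u hY (vecsD (Y t) (fun i => (- alpha t) *: Gf arc C (Y t) i)) vecsZ.
have [c c0 hc] := coercive (Msym C hsym) (Mpsd C hsym) (Mdef hsym hwc).
have [K K0 hK] := bound (Mg arc C).
set V := fun t => dotv (u t) (u t).
have hV t : V t.+1 <= V t - 2 * alpha t * c * V t + alpha t ^+ 2 * K * V t.
  rewrite /V hu !dotvDl !dotvDr !dotvZl !dotvZr (dotvC (u t *m _) (u t)).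
  have h1 := hc (u t); have h2 := hK (u t); have ha := apos t.
  set P := dotv (u t) (u t *m Mg arc C) in h1 *.
  set Q := dotv (u t *m Mg arc C) (u t *m Mg arc C) in h2 *.
  set D := dotv (u t) (u t) in h1 h2 *.
  have e1 : alpha t * (c * D) <= alpha t * P by rewrite ler_pM2l.
  have e2 : alpha t ^+ 2 * Q <= alpha t ^+ 2 * (K * D) by rewrite ler_wpM2l ?sqr_ge0.
  have -> : D + - alpha t * P + (- alpha t * P + - alpha t * (- alpha t * Q)) = D - 2 * (alpha t * P) + alpha t ^+ 2 * Q by ring.
  have -> : D - 2 * alpha t * c * D + alpha t ^+ 2 * K * D = D - 2 * (alpha t * (c * D)) + alpha t ^+ 2 * (K * D) by ring.
  lra.
have hdec := decay c0 K0 (fun t => dotv_ge0 (u t)) apos hV hS ha2.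
exists xs => i; apply/cvgrPdist_lt => eps eps0.
have [N HN] := hdec (eps ^+ 2) (exprn_gt0 2 eps0).
exists N => // t /= /HN hVt.
change (mx_norm (xs - x t i) < eps).
rewrite mx_normrE; apply: bigmax_lt => // -[a b] _ /=.
have e : (xs - x t i) a b = - (u t 0 (mxvec_index a i)).
  by rewrite /u /vecs mxvecE !mxE (ord1 b) opprB.
rewrite e normrN.
have hco := dotv_coord (u t) (mxvec_index a i).
set y := u t 0 (mxvec_index a i) in hco *.
rewrite ltNge; apply/negP => h.
have hy : `|y| ^+ 2 = y ^+ 2 by rewrite real_normK // num_real.
have := normr_ge0 y.
nra.
Qed.
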